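(* Let $H$ be a graph and $q\in\mathbb N$, and suppose $H\otimes J_q$ contains a matching-linked set $X$. Then $\gamma(H)\ge \frac13\cdot |X|/q$.
   Context: Blowup: for a graph $H$ and $t\in\mathbb N$, $H\otimes J_t$ has vertices $v^{(i)}$ for $v\in V(H)$, $i\in[t]$, and edges $u^{(i)}v^{(j)}$ for all $uv\in E(H)$, $i,j\in[t]$, together with $u^{(i)}u^{(j)}$ for all $u\in V(H)$, $i\neq j\in[t]$. A matching on a vertex set $X$ is a set of pairwise disjoint unordered pairs of distinct vertices of $X$ (not necessarily edges of the graph). For a graph $H'$ and a multigraph $M$ with $V(M)\subseteq V(H')$, an $M$-linkage in $H'$ is a family of paths $(P_e)_{e\in E(M)}$ in $H'$ such that $P_e$ has the endpoints of $e$ as its endpoints; it is uncongested if every vertex lies on at most one of the paths. $X\subseteq V(H')$ is matching-linked in $H'$ if $H'$ contains an uncongested $M$-linkage for every matching $M$ on $X$. Linkage capacity: $\gamma(H)$ is the supremum of all $c>0$ such that for all sufficiently large $t\in\mathbb N$ the blowup $H\otimes J_t$ contains a matching-linked set of size $\lfloor ct\rfloor$. *)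

(* Defs.v *)
From HB Require Import structures.
From mathcomp Require Import all_boot all_order all_algebra.
From mathcomp Require Import boolp classical_sets reals.
Set Implicit Arguments. Unset Strict Implicit. Unset Printing Implicit Defensive.
Import Order.TTheory GRing.Theory Num.Theory.

Definition simple_graph (T : finType) (e : rel T) : Prop :=
  symmetric e /\ irreflexive e.

(* Blowup H (x) J_t : vertices (v, i) with v in V(H), i in [t];
   (u,i) ~ (v,j) iff uv in E(H), or u = v and i <> j. *)
Definition blowup_adj (T : finType) (e : rel T) (t : nat) : rel (T * 'I_t) :=
  fun x y => e x.1 y.1 || ((x.1 == y.1) && (x.2 != y.2)).

Definition is_path (V : finType) (g : rel V) (x y : V) (p : seq V) : Prop :=
  exists rest, p = x :: rest /\ path g x rest /\ last x rest = y /\ uniq p.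

(* A matching on X, listed as a sequence of (oriented representatives of)
   unordered pairs {x,y} with x <> y, x, y in X, and all pairs disjoint. *)
Definition matching_on (V : finType) (X : {set V}) (M : seq (V * V)) : Prop :=
  (forall m, m \in M -> [/\ m.1 \in X, m.2 \in X & m.1 != m.2]) /\
  uniq (flatten [seq [:: m.1; m.2] | m <- M]).

Definition uncongested_linkage (V : finType) (g : rel V) (M : seq (V * V))
    (Ps : seq (seq V)) : Prop :=
  size Ps = size M /\
  (forall (k : nat) (d : V * V), k < size M ->
     is_path g (nth d M k).1 (nth d M k).2 (nth [::] Ps k)) /\
  (forall v k l, k < size Ps -> l < size Ps ->
     v \in nth [::] Ps k -> v \in nth [::] Ps l -> k = l).

Definition matching_linked (V : finType) (g : rel V) (X : {set V}) : Prop :=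
  forall M : seq (V * V), matching_on X M ->
    exists Ps : seq (seq V), uncongested_linkage g M Ps.

Definition capacity_set (R : realType) (T : finType) (e : rel T) : set R :=
  fun c => (0 < c)%R /\ exists N : nat, forall t : nat, (N <= t)%N ->
    exists X : {set T * 'I_t},
      (#|X|%:Z = Num.floor (c * t%:R)%R)%R /\ matching_linked (@blowup_adj T e t) X.

Definition linkage_capacity (R : realType) (T : finType) (e : rel T) : R :=
  sup (@capacity_set R T e).

(* Main.v *)
Require Import Defs.
From HB Require Import structures.
From mathcomp Require Import all_boot all_order all_algebra.
From mathcomp Require Import boolp classical_sets reals.
From mathcomp Require Import zify ring lra.
Import Order.TTheory GRing.Theory Num.Theory.
Set Implicit Arguments. Unset Strict Implicit. Unset Printing Implicit Defensive.

Definition inpair (V : eqType) (d : V * V) (M : seq (V * V)) k (z : V) :=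
  z \in [:: (nth d M k).1; (nth d M k).2].

Lemma inpair_flat (V : eqType) d (M : seq (V * V)) k z :
  k < size M -> inpair d M k z -> z \in flatten [seq [:: m.1; m.2] | m <- M].
Proof.
move=> Hk Hz; apply/flattenP; exists [:: (nth d M k).1; (nth d M k).2] => //.
by apply/mapP; exists (nth d M k) => //; apply: mem_nth.
Qed.

Lemma flat_uniq_idx (V : eqType) (M : seq (V * V)) d k1 k2 z :
  uniq (flatten [seq [:: m.1; m.2] | m <- M]) -> k1 < size M -> k2 < size M ->
  inpair d M k1 z -> inpair d M k2 z -> k1 = k2.
Proof.
elim: M k1 k2 => [|m M IH] [|k1] [|k2] //=.
- move=> /andP[H1 /andP[H2 _]] _ Hk2 Hz1 Hz2.
  have := inpair_flat Hk2 Hz2; move: Hz1; rewrite /inpair /= !inE.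
  by case/orP=> /eqP ->; rewrite ?(negbTE H2); [move: H1; rewrite inE negb_or => /andP[_ /negbTE ->]|].
- move=> /andP[H1 /andP[H2 _]] Hk1 _ Hz1 Hz2.
  have := inpair_flat Hk1 Hz1; move: Hz2; rewrite /inpair /= !inE.
  by case/orP=> /eqP ->; rewrite ?(negbTE H2); [move: H1; rewrite inE negb_or => /andP[_ /negbTE ->]|].
- move=> /andP[_ /andP[_ HU]] Hk1 Hk2 Hz1 Hz2.
  by congr S; apply: (IH k1 k2 HU).
Qed.

Lemma uniq_flat_pairs (A V : eqType) (f g : A -> V) (s : seq A) :
  uniq s -> (forall k, k \in s -> f k != g k) ->
  (forall k l, k \in s -> l \in s -> k != l ->
     (f k \notin [:: f l; g l]) && (g k \notin [:: f l; g l])) ->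
  uniq (flatten [seq [:: f k; g k] | k <- s]).
Proof.
elim: s => [|a s IH] //= /andP[Ha Hs] Hfg Hd.
idtac.
have Hnot : forall z, z \in [:: f a; g a] -> z \notin flatten [seq [:: f k; g k] | k <- s].
  move=> z Hz; apply/negP => /flattenP [w /mapP [l Hl ->] Hzl].
  have Hal : a != l by apply/negP => /eqP Hal; move: Ha; rewrite Hal Hl.
  have /andP[H1 H2] := Hd a l (mem_head _ _) (mem_behead (s:=a::s) Hl) Hal.
  by move: Hz; rewrite !inE => /orP[] /eqP Hz; subst z; [move: H1|move: H2]; rewrite Hzl.
rewrite inE negb_or Hfg ?mem_head //= Hnot ?inE ?eqxx ?orbT //= Hnot ?mem_head //=.
apply: IH => // [k Hk|k l Hk Hl]; first by apply: Hfg; rewrite inE Hk orbT.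
  by apply: Hd; rewrite inE ?Hk ?Hl orbT.
by rewrite !inE eqxx orbT.
Qed.

Lemma greedy (K : nat) (conf : rel nat) (s : seq nat) : 0 < K -> symmetric conf ->
  (forall i, i \in s -> count (conf i) s < K) ->
  exists col : nat -> 'I_K, forall i j, i \in s -> j \in s -> i != j -> conf i j -> col i != col j.
Proof.
move=> HK Hsym; elim: s => [|a s IH] Hb.
  by exists (fun _ => Ordinal HK).
have [col Hcol] : exists col : nat -> 'I_K, forall i j, i \in s -> j \in s -> i != j -> conf i j -> col i != col j.
  apply: IH => i Hi; apply: leq_ltn_trans (Hb i (mem_behead (s:=a::s) Hi)) => /=; lia.
set used := [seq col j | j <- s & conf a j].
have [c Hc] : exists c : 'I_K, c \notin used.
  case: (pickP [pred c : 'I_K | c \notin used]) => [c Hc|H]; first by exists c.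
  have : size (enum 'I_K) <= size used.
    apply: uniq_leq_size; first exact: enum_uniq.
    by move=> c _; move: (H c) => /= /negbFE.
  rewrite size_enum_ord size_map size_filter => Hle.
  have := Hb a (mem_head _ _); rewrite /= => Hc.
  by have := leq_ltn_trans Hle (leq_ltn_trans (leq_addl _ _) Hc); rewrite ltnn.
exists (fun x => if x == a then c else col x) => i j Hi Hj Hij Hc'.
case: (eqVneq i a) => [Eia|Nia]; case: (eqVneq j a) => [Eja|Nja].
- by move: Hij; rewrite Eia Eja eqxx.
- subst i; have Hj' : j \in s by move: Hj; rewrite inE (negbTE Nja).
  apply/negP => /eqP Ecol; move: Hc; rewrite Ecol; apply/negP/negPn.
  by apply/mapP; exists j => //; rewrite mem_filter Hc' Hj'.
- subst j; have Hi' : i \in s by move: Hi; rewrite inE (negbTE Nia).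
  apply/negP => /eqP Ecol; move: Hc; rewrite -Ecol; apply/negP/negPn.
  by apply/mapP; exists i => //; rewrite mem_filter Hsym Hc' Hi'.
- apply: Hcol => //; first by move: Hi; rewrite inE (negbTE Nia).
  by move: Hj; rewrite inE (negbTE Nja).
Qed.


Section Big.
Variables (T : finType) (e : rel T) (q t d : nat).
Local Notation Vs := (T * 'I_q.+1)%type.
Local Notation Vb := (T * 'I_t.+1)%type.
Hypothesis Hdt : 3 * d * q.+1 <= t.+1.

Definition emb (l : nat) (x : Vs) : Vb := (x.1, inord (l * q.+1 + x.2)).
Definition layer (z : Vb) := z.2 %/ q.+1.
Definition proj (z : Vb) : Vs := (z.1, inord (z.2 %% q.+1)).

Lemma emb_bound l (x : Vs) : l < 3 * d -> l * q.+1 + x.2 <= t.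
Proof.
move=> Hl; have Hx := ltn_ord x.2.
have : l.+1 * q.+1 <= 3 * d * q.+1 by rewrite leq_mul2r Hl orbT.
rewrite mulSn; lia.
Qed.

Lemma emb2 l x : l < 3 * d -> val (emb l x).2 = l * q.+1 + x.2.
Proof. by move=> Hl; rewrite /= inordK // ltnS emb_bound. Qed.

Lemma layer_emb l x : l < 3 * d -> layer (emb l x) = l.
Proof.
by move=> Hl; rewrite /layer emb2 // divnMDl // divn_small ?addn0.
Qed.

Lemma proj_emb l x : l < 3 * d -> proj (emb l x) = x.
Proof.
move=> Hl; rewrite /proj emb2 // modnMDl modn_small // inord_val.
by case: x.
Qed.

Lemma proj2 z : val (proj z).2 = z.2 %% q.+1.
Proof. by rewrite /= inordK // ltnS -ltnS ltn_pmod. Qed.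

Lemma proj_layer_inj z1 z2 : proj z1 = proj z2 -> layer z1 = layer z2 -> z1 = z2.
Proof.
move=> Hp Hl; case: z1 z2 Hp Hl => [v1 s1] [v2 s2] Hp Hl.
have E1 : v1 = v2 by move: Hp => /(congr1 fst).
have E2 : s1 %% q.+1 = s2 %% q.+1.
  by move: (proj2 (v1, s1)) (proj2 (v2, s2)); rewrite Hp => -> ->.
rewrite E1; congr pair; apply: val_inj => /=.
by rewrite (divn_eq s1 q.+1) (divn_eq s2 q.+1) E2; move: Hl; rewrite /layer /= => ->.
Qed.

Lemma emb_inj l1 l2 x1 x2 : l1 < 3 * d -> l2 < 3 * d -> emb l1 x1 = emb l2 x2 -> l1 = l2 /\ x1 = x2.
Proof.
move=> H1 H2 E; split.
  by rewrite -(layer_emb x1 H1) -(layer_emb x2 H2) E.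
by rewrite -(proj_emb x1 H1) -(proj_emb x2 H2) E.
Qed.

Lemma adj_emb l x y : l < 3 * d -> blowup_adj e x y -> blowup_adj e (emb l x) (emb l y).
Proof.
move=> Hl; rewrite /blowup_adj /= => /orP[->//|/andP[/eqP E Hxy]]; apply/orP; right; rewrite E eqxx /=.
apply/negP => /eqP /(congr1 val); rewrite !emb2 //= => /addnI /val_inj /eqP.
by rewrite (negbTE Hxy).
Qed.


Lemma port z l : layer z != l -> l < 3 * d ->
  blowup_adj e z (emb l (proj z)) && blowup_adj e (emb l (proj z)) z.
Proof.
move=> Hz Hl; rewrite /blowup_adj /= eqxx /=.
have Ne : z.2 != (emb l (proj z)).2.
  apply/negP => /eqP E; move: Hz; rewrite /layer E.
  by rewrite -/(layer (emb l _)) layer_emb // eqxx.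
by rewrite Ne eq_sym Ne !orbT.
Qed.

Definition Xbig (X : {set Vs}) : {set Vb} := [set z | (layer z < d) && (proj z \in X)].

Section Link.
Variable X : {set Vs}.
Variable M : seq (Vb * Vb).
Variable d0 : Vb * Vb.
Hypothesis HM : matching_on (Xbig X) M.

Definition u k := (nth d0 M k).1.
Definition w k := (nth d0 M k).2.
Definition dir k := (u k).1 == (w k).1.
Definition Sx (x : Vs) k := (proj (u k) == x) || (proj (w k) == x).
Definition conf k l := ~~ dir k && ~~ dir l &&
  [|| proj (u k) == proj (u l), proj (u k) == proj (w l),
      proj (w k) == proj (u l) | proj (w k) == proj (w l)].

Lemma endpts k : k < size M -> [/\ u k \in Xbig X, w k \in Xbig X & u k != w k].
Proof. by move=> Hk; apply: HM.1; apply: mem_nth. Qed.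

Lemma endpt_layer k : k < size M -> layer (u k) < d /\ layer (w k) < d.
Proof.
by move=> /endpts [Hu Hw _]; move: Hu Hw; rewrite !inE => /andP[-> _] /andP[-> _].
Qed.

Lemma endpt_idx k l z : k < size M -> l < size M ->
  z \in [:: u k; w k] -> z \in [:: u l; w l] -> k = l.
Proof. by move=> Hk Hl Hz1 Hz2; apply: (flat_uniq_idx HM.2 Hk Hl Hz1 Hz2). Qed.

Lemma conf_sym : symmetric conf.
Proof.
move=> k l; rewrite /conf; case: (dir k); case: (dir l) => //=.
by apply/idP/idP => /or4P [] /eqP ->; rewrite eqxx ?orbT.
Qed.

Lemma count_Sx x : count (Sx x) (iota 0 (size M)) <= d.
Proof.
pose f k := layer (if proj (u k) == x then u k else w k).
rewrite -size_filter -(size_map f) -[d](size_iota 0).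
apply: uniq_leq_size.
  rewrite map_inj_in_uniq ?filter_uniq ?iota_uniq // => k l.
  rewrite !mem_filter !mem_iota /= !add0n /f /Sx => /andP[Hk1 Hk] /andP[Hl1 Hl] Hf.
  apply: (@endpt_idx k l (if proj (u k) == x then u k else w k)) => //.
    by case: ifP; rewrite !inE eqxx ?orbT.
  have -> : (if proj (u k) == x then u k else w k) = (if proj (u l) == x then u l else w l).
    apply: proj_layer_inj => //.
    by case: ifP Hk1 => [/eqP->|_ /= /eqP->]; case: ifP Hl1 => [/eqP->|_ /= /eqP->].
  by case: ifP; rewrite !inE eqxx ?orbT.
move=> y /mapP [k]; rewrite mem_filter mem_iota /= add0n => /andP[_ Hk] ->.
rewrite mem_iota add0n /f; have [H1 H2] := endpt_layer Hk.
by case: ifP.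
Qed.

Lemma conf_count i : i \in iota 0 (size M) -> count (conf i) (iota 0 (size M)) < 2 * d.
Proof.
move=> Hi.
have Hle : count (conf i) (iota 0 (size M)) <= count (predU (Sx (proj (u i))) (Sx (proj (w i)))) (iota 0 (size M)).
  apply: sub_count => l; rewrite /conf /Sx /= => /andP[_].
  by case/or4P => /eqP ->; rewrite eqxx ?orbT.
have HI : 0 < count (predI (Sx (proj (u i))) (Sx (proj (w i)))) (iota 0 (size M)).
  by rewrite -has_count; apply/hasP; exists i => //=; rewrite /Sx !eqxx ?orbT.
have := count_predUI (Sx (proj (u i))) (Sx (proj (w i))) (iota 0 (size M)).
have := count_Sx (proj (u i)); have := count_Sx (proj (w i)); lia.
Qed.

Hypothesis Hd0 : 0 < d.
Variable col : nat -> 'I_(2 * d).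
Hypothesis Hcol : forall i j, i \in iota 0 (size M) -> j \in iota 0 (size M) ->
  i != j -> conf i j -> col i != col j.

Definition Ic (c : 'I_(2 * d)) := [seq k <- iota 0 (size M) | ~~ dir k && (col k == c)].
Definition Mc c := [seq (proj (u k), proj (w k)) | k <- Ic c].

Lemma Ic_mem c k : (k \in Ic c) = [&& k < size M, ~~ dir k & col k == c].
Proof. by rewrite mem_filter mem_iota add0n /= andbC. Qed.

Lemma Mc_matching c : matching_on X (Mc c).
Proof.
split.
  move=> m /mapP [k]; rewrite Ic_mem => /and3P[Hk Hdir _] -> /=.
  have [Hu Hw _] := endpts Hk; move: Hu Hw; rewrite !inE => /andP[_ ->] /andP[_ ->].
  split => //; apply/negP => /eqP /(congr1 fst) /= E.
  by move: Hdir; rewrite /dir E eqxx.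
rewrite -map_comp; apply: uniq_flat_pairs.
- by rewrite filter_uniq ?iota_uniq.
- move=> k; rewrite Ic_mem => /and3P[_ Hdir _] /=; apply/negP => /eqP /(congr1 fst) /= E.
  by move: Hdir; rewrite /dir E eqxx.
- move=> k l; rewrite !Ic_mem => /and3P[Hk Hdk /eqP Hck] /and3P[Hl Hdl /eqP Hcl] Hkl /=.
  have : ~~ conf k l.
    have Hik : k \in iota 0 (size M) by rewrite mem_iota.
    have Hil : l \in iota 0 (size M) by rewrite mem_iota.
    by apply/negP => Hc; have := Hcol Hik Hil Hkl Hc; rewrite Hck Hcl eqxx.
  by rewrite /conf Hdk Hdl /= !negb_or => /and4P[H1 H2 H3 H4]; rewrite H1 H2 H3 H4.
Qed.

Variable Ps : 'I_(2 * d) -> seq (seq Vs).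
Hypothesis HPs : forall c, uncongested_linkage (@blowup_adj T e q.+1) (Mc c) (Ps c).

Definition P k := nth [::] (Ps (col k)) (index k (Ic (col k))).
Definition Q k := if dir k then [:: u k; w k]
  else u k :: rcons (map (emb (d + col k)) (P k)) (w k).

Lemma idx_lt k : k < size M -> ~~ dir k -> index k (Ic (col k)) < size (Mc (col k)).
Proof. by move=> Hk Hd; rewrite size_map index_mem Ic_mem Hk Hd eqxx. Qed.

Lemma P_path k : k < size M -> ~~ dir k ->
  is_path (@blowup_adj T e q.+1) (proj (u k)) (proj (w k)) (P k).
Proof.
move=> Hk Hd; have [_ [Hp _]] := HPs (col k).
have := Hp _ (proj (u k), proj (w k)) (idx_lt Hk Hd).
rewrite (nth_map k) ?nth_index ?Ic_mem ?Hk ?Hd ?eqxx //.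
by rewrite -(size_map (fun k => (proj (u k), proj (w k)))) idx_lt.
Qed.

Lemma lay_lt (c : 'I_(2 * d)) : d + c < 3 * d.
Proof. have := ltn_ord c; lia. Qed.

Lemma Q_path k : k < size M -> is_path (@blowup_adj T e t.+1) (u k) (w k) (Q k).
Proof.
move=> Hk; have [Hu Hw Huw] := endpts Hk; have [Lu Lw] := endpt_layer Hk.
rewrite /Q; case: ifP => Hd.
  exists [:: w k]; split => //; split; last by split => //=; rewrite inE Huw.
  rewrite /= andbT /blowup_adj; move: Hd Huw; rewrite /dir; case: (u k) => a b; case: (w k) => c d1 /= /eqP -> ; rewrite xpair_eqE eqxx /= => ->; by rewrite orbT.
have [rest [EP [Hp [Hl Hun]]]] := P_path Hk (negbT Hd).
set l := d + col k.
have Hlt : l < 3 * d := lay_lt (col k).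
have Hlay : forall z, z \in map (emb l) (P k) -> layer z = l.
  by move=> z /mapP [y _ ->]; rewrite layer_emb.
exists (rcons (map (emb l) (P k)) (w k)); split => //; split; last split.
- have [P1 _] := andP (port (negbT (ltn_eqF (leq_trans Lu (leq_addr _ _)))) Hlt).
  have [_ P2] := andP (port (negbT (ltn_eqF (leq_trans Lw (leq_addr _ _)))) Hlt).
  rewrite rcons_path EP /= P1 /=; apply/andP; split.
    by rewrite path_map; apply: sub_path Hp => x y; apply: adj_emb.
  by rewrite last_map Hl.
- by rewrite last_rcons.
- rewrite /= rcons_uniq mem_rcons !inE negb_or Huw /=.
  have Hnot : forall z, layer z < d -> z \notin map (emb l) (P k).
    by move=> z Hz; apply/negP => /Hlay E; move: Hz; rewrite E /l; lia.
  by rewrite Hnot // Hnot //= map_inj_uniq // => x y /(emb_inj Hlt Hlt) [_ ->].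
Qed.

Lemma Q_mem k z : z \in Q k ->
  z \in [:: u k; w k] \/ (~~ dir k /\ z \in map (emb (d + col k)) (P k)).
Proof.
rewrite /Q; case: ifP => Hd; first by left.
rewrite inE mem_rcons inE => /or3P [H|H|H]; [left|left|right].
- by rewrite inE H.
- by rewrite !inE H orbT.
- by [].
Qed.

Lemma Q_disj z k l : k < size M -> l < size M -> z \in Q k -> z \in Q l -> k = l.
Proof.
move=> Hk Hl /Q_mem [Ek|[Dk Ek]] /Q_mem [El|[Dl El]].
- exact: endpt_idx Ek El.
- exfalso; move: El => /mapP [y _ Ey].
  have : layer z < d.
    by have [H1 H2] := endpt_layer Hk; move: Ek; rewrite !inE => /orP[] /eqP ->.
  by rewrite Ey layer_emb ?lay_lt //; lia.
- exfalso; move: Ek => /mapP [y _ Ey].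
  have : layer z < d.
    by have [H1 H2] := endpt_layer Hl; move: El; rewrite !inE => /orP[] /eqP ->.
  by rewrite Ey layer_emb ?lay_lt //; lia.
- move: Ek El => /mapP [x Hx ->] /mapP [y Hy] /(emb_inj (lay_lt _) (lay_lt _)) [Ec Exy].
  have Ecol : col k = col l by apply: val_inj; move: Ec => /addnI.
  subst y; move: Hx Hy; rewrite /P Ecol => Hx Hy.
  have [Hs [_ Hdj]] := HPs (col l).
  have Hik := idx_lt Hk Dk; have Hil := idx_lt Hl Dl.
  rewrite Ecol -Hs in Hik; rewrite -Hs in Hil.
  have Ej := Hdj x _ _ Hik Hil Hx Hy.
  have Mk : k \in Ic (col l) by rewrite Ic_mem Hk Dk Ecol eqxx.
  have Ml : l \in Ic (col l) by rewrite Ic_mem Hl Dl eqxx.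
  by rewrite -(nth_index 0 Mk) Ej nth_index.
Qed.

End Link.
Lemma big_linked (X : {set Vs}) : 0 < d -> matching_linked (@blowup_adj T e q.+1) X ->
  matching_linked (@blowup_adj T e t.+1) (Xbig X).
Proof.
move=> Hd0 HL M HM.
case EM: M => [|m0 M0].
  by exists [::]; split => //; split => // v k l.
rewrite -EM.
have HK : 0 < 2 * d by lia.
have [col Hcol] := @greedy (2 * d) (conf M m0) (iota 0 (size M)) HK (@conf_sym M m0) (conf_count m0 HM).
have [Ps HPs] := choice (fun c => HL (Mc M m0 col c) (Mc_matching (d0:=m0) HM Hcol c)).
exists (map (Q M m0 col Ps) (iota 0 (size M))).
split; first by rewrite size_map size_iota.
split.
  move=> k dd Hk; rewrite (nth_map 0) ?size_iota // nth_iota // add0n.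
  rewrite (set_nth_default m0 dd Hk).
  exact: (Q_path (d0:=m0) HM Hd0 HPs Hk).
move=> v k l; rewrite size_map size_iota => Hk Hl.
rewrite !(nth_map 0) ?size_iota // !nth_iota // !add0n.
exact: (Q_disj (d0:=m0) HM Hd0 HPs Hk Hl).
Qed.

Lemma Xbig_card (X : {set Vs}) : d * #|X| <= #|Xbig X|.
Proof.
pose F (p : 'I_d * Vs) := emb p.1 p.2.
have Hinj : injective F.
  move=> [l1 x1] [l2 x2]; rewrite /F /= => E.
  have H1 : (l1 : nat) < 3 * d by have := ltn_ord l1; lia.
  have H2 : (l2 : nat) < 3 * d by have := ltn_ord l2; lia.
  by have [/val_inj -> ->] := emb_inj H1 H2 E.
have <- : #|F @: finset.setX [set: 'I_d] X| = d * #|X|.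
  by rewrite card_imset // cardsX cardsT card_ord.
apply: subset_leq_card; apply/fintype.subsetP => z /imsetP [[l x]]; rewrite inE /= => /andP[_ Hx] ->.
have Hl : (l : nat) < 3 * d by have := ltn_ord l; lia.
by rewrite inE /F /= layer_emb // proj_emb // Hx ltn_ord.
Qed.

End Big.


Lemma linked_sub (V : finType) (g : rel V) (A B : {set V}) :
  A \subset B -> matching_linked g B -> matching_linked g A.
Proof.
move=> HAB HB M [H1 H2]; apply: HB; split => // m Hm.
have [Ha Hb Hn] := H1 m Hm; split => //; exact: (fintype.subsetP HAB).
Qed.

Lemma sized_sub (V : finType) (A : {set V}) m : m <= #|A| ->
  exists B : {set V}, B \subset A /\ #|B| = m.
Proof.
move=> Hm; exists [set x in take m (enum A)]; split.
  apply/fintype.subsetP => x; rewrite inE => /mem_take; by rewrite mem_enum.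
rewrite cardsE; have /card_uniqP -> : uniq (take m (enum A)) by apply: take_uniq; apply: enum_uniq.
by rewrite size_take -cardE; case: ltngtP Hm => //; lia.
Qed.

Lemma construct (T : finType) (e : rel T) (q : nat) (X : {set T * 'I_q.+1}) (t d m : nat) :
  0 < d -> 3 * d * q.+1 <= t.+1 -> matching_linked (@blowup_adj T e q.+1) X ->
  m <= d * #|X| ->
  exists Y : {set T * 'I_t.+1}, #|Y| = m /\ matching_linked (@blowup_adj T e t.+1) Y.
Proof.
move=> Hd Hdt HL Hm.
have HX := big_linked Hdt Hd HL.
have Hc := Xbig_card Hdt X.
have [Y [HY HYc]] := sized_sub (leq_trans Hm Hc).
by exists Y; split => //; apply: linked_sub HY HX.
Qed.

Local Open Scope ring_scope.

Lemma cap_bound (R : realType) (T : finType) (e : rel T) c :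
  @capacity_set R T e c -> c <= #|T|%:R + 1.
Proof.
move=> [Hc [N HN]]; have [Y [HY _]] := HN N.+1 (leqnSn N).
have HYc : (#|Y| <= #|T| * N.+1)%N.
  by have := max_card (mem Y); rewrite card_prod card_ord.
have /andP[_ Hf] := floor_itv (c * N.+1%:R).
rewrite -HY in Hf.
have Hf' : c * N.+1%:R < #|Y|%:R + 1 by move: Hf; rewrite intrD.
have HY' : (#|Y|%:R : R) <= #|T|%:R * N.+1%:R by rewrite -natrM ler_nat.
have HN1 : (1 : R) <= N.+1%:R by rewrite ler1n.
have : c * N.+1%:R < (#|T|%:R + 1) * N.+1%:R by nra.
by rewrite ltr_pM2r ?ltr0n // => /ltW.
Qed.

Lemma in_cap (R : realType) (T : finType) (e : rel T) (q : nat) (X : {set T * 'I_q.+1}) (c : R) :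
  matching_linked (@blowup_adj T e q.+1) X -> 0 < c ->
  c * (3 * q.+1)%:R < #|X|%:R -> @capacity_set R T e c.
Proof.
move=> HL Hc Hlt; split => //.
set n := #|X|; set Q := (3 * q.+1)%N.
set dl := n%:R - c * Q%:R.
have Hdl : 0 < dl by rewrite /dl subr_gt0.
have HQ : (0 < Q)%N by rewrite /Q.
set B := Num.bound ((Q * n)%:R / dl).
have HB := archi_boundP (divr_ge0 (ler0n R (Q * n)) (ltW Hdl)).
exists (maxn Q B) => t Ht.
have HtQ : (Q <= t)%N by move: Ht; rewrite geq_max => /andP[].
have HtB : (B <= t)%N by move: Ht; rewrite geq_max => /andP[].
case: t Ht HtQ HtB => [|t] Ht HtQ HtB; first by move: HtQ; rewrite leqn0 /Q.
set d := (t.+1 %/ Q)%N.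
have Hd : (0 < d)%N by rewrite divn_gt0.
have Hdt : (3 * d * q.+1 <= t.+1)%N.
  by have := leq_divM t.+1 Q; rewrite /Q -/d; lia.
set m := `|Num.floor (c * t.+1%:R)|%N.
have Hfl0 : 0 <= Num.floor (c * t.+1%:R) by rewrite floor_ge0 mulr_ge0 ?ltW.
have Hm : m%:Z = Num.floor (c * t.+1%:R) by rewrite /m gez0_abs.
have Hmle : (m <= d * n)%N.
  rewrite -(ler_nat R).
  have -> : (m%:R : R) = (Num.floor (c * t.+1%:R))%:~R by rewrite -Hm.
  apply: le_trans (floor_le _) _.
  have Et := divn_eq t.+1 Q; have Hr := ltn_pmod t.+1 HQ.
  set r := (t.+1 %% Q)%N in Et Hr.
  have Et' : (t.+1%:R : R) = d%:R * Q%:R + r%:R by rewrite -natrM -natrD -Et.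
  have Hr' : (r%:R : R) + 1 <= Q%:R by rewrite natr1 ler_nat.
  have HtB' : ((Q * n)%:R / dl : R) < t.+1%:R.
    by apply: lt_le_trans HB _; rewrite ler_nat.
  have HtB'' : ((Q * n)%:R : R) < t.+1%:R * dl.
    by rewrite -ltr_pdivrMr.
  rewrite natrM in HtB''; rewrite natrM.
  have HQ' : (0 : R) < Q%:R by rewrite ltr0n.
  have Hn0 : (0 : R) <= n%:R by [].
  rewrite /dl in HtB''.
  suff : c * t.+1%:R * Q%:R <= d%:R * n%:R * Q%:R by rewrite ler_pM2r.
  nra.
have [Y [HYc HY]] := construct Hd Hdt HL Hmle.
by exists Y; split => //; rewrite HYc Hm.
Qed.

Unset Implicit Arguments.
Local Open Scope ring_scope.

Theorem mainTheorem6 (R : realType) (T : finType) (e : rel T) (q : nat)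
    (X : {set T * 'I_q}) :
  simple_graph e -> (0 < q)%N ->
  matching_linked (@blowup_adj T e q) X ->
  (1 / 3) * (#|X|%:R / q%:R) <= @linkage_capacity R T e.
Proof.
move=> _; case: q X => [|q] X // _ HL.
set S := @capacity_set R T e.
have Hub : has_ubound S.
  by exists (#|T|%:R + 1); apply/ubP => c Sc; exact: (cap_bound Sc).
have Hsup0 : 0 <= sup S.
  case: (EM (exists c, S c)) => [[c Sc]|Hne].
    apply: le_trans (ltW Sc.1) _; exact: (sup_upper_bound (conj (ex_intro _ c Sc) Hub)).
  by rewrite sup_out // => [[]].
rewrite /linkage_capacity -/S.
case: (posnP #|X|) => [->|Hn]; first by rewrite mul0r mulr0.
set a := 1 / 3 * (#|X|%:R / q.+1%:R).
have Ha : a * (3 * q.+1)%:R = #|X|%:R.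
  rewrite /a natrM; field; by rewrite addrC natr1 pnatr_eq0.
have Ha0 : 0 < a by rewrite /a !mulr_gt0 ?invr_gt0 ?ltr0n.
case: (lerP a (sup S)) => // Hlt.
set c := (sup S + a) / 2.
have Hc0 : 0 < c by rewrite /c; lra.
have Hca : c < a by rewrite /c; lra.
have Sc : S c.
  apply: (in_cap HL Hc0); rewrite -Ha ltr_pM2r ?ltr0n //.
have : c <= sup S.
  by apply: (sup_upper_bound (conj (ex_intro _ c Sc) Hub)).
rewrite /c; lra.
Qed.
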